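(* Let $X$ be an L-space and $U,V\in{\sf ClopUp}(X)$. (1) $\mathrm{core}\,U\subseteq\ker U\subseteq U$. (2) If $U\subseteq V$ then $\mathrm{core}\,U\subseteq\mathrm{core}\,V$. (3) If $X$ is an algebraic L-space, then $X$ is a continuous L-space. (4) $U$ is a Scott upset if and only if $\mathrm{core}\,U=U$.
   Context: A Priestley space is a Stone space $X$ with a partial order such that clopen upsets separate points. An L-space is a Priestley space in which the downset of each clopen set is clopen and the closure of each open upset is open. ${\sf ClopUp}(X)$ is the set of clopen upsets of $X$; $\mathrm{cl}$ denotes closure. The spatial part of $X$ is $Y=\{y\in X\mid{\downarrow}y\text{ is clopen}\}$. A Scott upset is a closed upset $F$ with $\min F\subseteq Y$; ${\sf ClopSUp}(X)$ is the set of clopen Scott upsets. For $U,V\in{\sf ClopUp}(X)$, write $V\ll U$ if for every open upset $W$ of $X$, $U\subseteq\mathrm{cl}\,W$ implies $V\subseteq W$. Define $\ker U=\bigcup\{V\in{\sf ClopUp}(X)\mid V\ll U\}$ and $\mathrm{core}\,U=\bigcup\{V\in{\sf ClopSUp}(X)\mid V\subseteq U\}$. $X$ is a continuous L-space if $\ker U$ is dense in $U$ for all $U\in{\sf ClopUp}(X)$, and an algebraic L-space if $\mathrm{core}\,U$ is dense in $U$ for all $U\in{\sf ClopUp}(X)$. *)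

(* Defs.v *)
From mathcomp Require Import all_boot all_order.
From mathcomp Require Import all_classical all_reals all_analysis.
Set Implicit Arguments. Unset Strict Implicit. Unset Printing Implicit Defensive.
Local Open Scope classical_set_scope.

Section PriestleyDefs.
Context {T : topologicalType} (le : T -> T -> Prop).

Definition partial_order : Prop :=
  [/\ (forall x, le x x),
      (forall x y, le x y -> le y x -> x = y) &
      (forall x y z, le x y -> le y z -> le x z)].

Definition upset (A : set T) : Prop := forall x y, A x -> le x y -> A y.

Definition downset (A : set T) : set T := [set x | exists2 y, A y & le x y].

Definition clopen_upset (A : set T) : Prop := clopen A /\ upset A.

Definition stone_space : Prop :=
  [/\ compact [set: T], hausdorff_space T & zero_dimensional T].

Definition priestley_space : Prop :=
  [/\ stone_space, partial_order &
      (forall x y, ~ le x y -> exists U, [/\ clopen_upset U, U x & ~ U y])].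

Definition L_space : Prop :=
  [/\ priestley_space,
      (forall A : set T, clopen A -> clopen (downset A)) &
      (forall W : set T, open W -> upset W -> open (closure W))].

Definition spatial_part : set T := [set y | clopen (downset [set y])].

Definition minimals (F : set T) : set T :=
  [set x | F x /\ forall y, F y -> le y x -> y = x].

Definition scott_upset (F : set T) : Prop :=
  [/\ closed F, upset F & minimals F `<=` spatial_part].

Definition clopen_scott_upset (F : set T) : Prop := clopen F /\ scott_upset F.

Definition way_below (V U : set T) : Prop :=
  forall W : set T, open W -> upset W -> U `<=` closure W -> V `<=` W.

Definition ker_up (U : set T) : set T :=
  [set x | exists2 V, clopen_upset V /\ way_below V U & V x].

Definition core_up (U : set T) : set T :=
  [set x | exists2 V, clopen_scott_upset V /\ V `<=` U & V x].

Definition dense_in (A B : set T) : Prop := B `<=` closure A.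

Definition continuous_L_space : Prop :=
  L_space /\ forall U, clopen_upset U -> dense_in (ker_up U) U.

Definition algebraic_L_space : Prop :=
  L_space /\ forall U, clopen_upset U -> dense_in (core_up U) U.

End PriestleyDefs.

(* Main.v *)
Require Import Defs.
From mathcomp Require Import all_boot all_order.
From mathcomp Require Import all_classical all_reals all_analysis.
Local Open Scope classical_set_scope.

Section Helpers.
Context {T : topologicalType} (le : T -> T -> Prop).

Lemma down_closed (c : T) : priestley_space le -> closed [set x | le x c].
Proof.
move=> [_ _ sep] p clp; apply: contrapT => npc.
have [U [[[oU _] uU] Up nUc]] := sep _ _ npc.
have /clp [w [/= lwc Uw]] : nbhs p U by apply: open_nbhs_nbhs.
by apply: nUc; apply: uU lwc.
Qed.

Lemma min_below (F : set T) (y : T) : priestley_space le -> closed F -> F y ->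
  exists m, minimals le F m /\ le m y.
Proof.
move=> PS cF Fy.
have [[cT _ _] [lerefl _ letrans] _] := PS.
pose S := {x : T | F x /\ le x y}.
pose R (a b : S) := `[< le (sval b) (sval a) >].
have [t tmax] : exists t : S, forall s, R t s -> s = t.
  apply: (@Zorn S R).
  - by move=> a; apply/asboolP.
  - by move=> a b c /asboolP ab /asboolP bc; apply/asboolP; apply: letrans bc ab.
  - move=> [a Pa] [b Pb] /asboolP ab /asboolP ba; apply: eq_exist.
    by have [_ [_ anti _] _] := PS; apply: anti.
  - move=> A Atot.
    have [[a0 A0]|A0] := pselect (exists a, A a); last first.
      exists (exist _ y (conj Fy (lerefl y))) => s As; exfalso; apply: A0; by exists s.
    pose B (a : S) := [set x | F x /\ le x (sval a)].
    have FF : ProperFilter (filter_from A B).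
      apply: filter_from_proper.
        apply: filter_from_filter; first by exists a0.
        move=> i j Ai Aj; have [/asboolP ij|/asboolP ji] := Atot _ _ Ai Aj.
          exists j => // x [Fx lx]; split; split => //; apply: letrans lx ij.
        exists i => // x [Fx lx]; split; split => //; apply: letrans lx ji.
      move=> i _; exists (sval i); split; [exact: (proj2_sig i).1|exact: lerefl].
    have [p [_ clp]] := cT _ FF filterT.
    have pB : forall a, A a -> B a p.
      move=> a Aa; have : closed (B a).
        apply: closedI => //; exact: (down_closed _ PS).
      apply => N Np; have := clp (B a) N; apply => //; by exists a.
    have [Fp lp0] := pB _ A0.
    have lpy : le p y by apply: letrans lp0 (proj2_sig a0).2.
    exists (exist _ p (conj Fp lpy)) => s As; apply/asboolP; exact: (pB _ As).2.
exists (sval t); split; last exact: (proj2_sig t).2.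
split; first exact: (proj2_sig t).1.
move=> z Fz lzt.
have lzy : le z y by apply: letrans lzt (proj2_sig t).2.
have := tmax (exist _ z (conj Fz lzy)); rewrite /R /=.
by move=> /(_ (asboolT lzt)) <-.
Qed.

End Helpers.

Theorem lemma4p2 (T : topologicalType) (le : T -> T -> Prop) :
  L_space le ->
  [/\ (forall U : set T, clopen_upset le U ->
         core_up le U `<=` ker_up le U /\ ker_up le U `<=` U),
      (forall U V : set T, clopen_upset le U -> clopen_upset le V ->
         U `<=` V -> core_up le U `<=` core_up le V),
      (algebraic_L_space le -> continuous_L_space le) &
      (forall U : set T, clopen_upset le U ->
         (scott_upset le U <-> core_up le U = U))].
Proof.
move=> LS; have [PS _ _] := LS.
have P1 : forall U : set T, clopen_upset le U ->
         core_up le U `<=` ker_up le U /\ ker_up le U `<=` U.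
  move=> U [[oU cU] uU]; split.
    move=> x [V [[[oV cV] [_ uV minV]] VU] Vx].
    exists V => //; split; first by split.
    move=> W oW uW UW v Vv.
    have [m [[Vm mmin] lmv]] := @min_below _ le _ _ PS cV Vv.
    have [oD _] : clopen (downset le [set m]) by apply: minV.
    have [_ [lerefl _ _] _] := PS.
    have : nbhs m (downset le [set m]).
      by apply: open_nbhs_nbhs; split => //; exists m.
    move=> /(UW m (VU _ Vm)) [w [Ww [m' /= -> lwm]]].
    by apply: uW (uW _ _ Ww lwm) lmv.
  move=> x [V [_ VU] Vx]; apply: (VU U) => //.
  exact: subset_closure.
split => //.
- move=> U V _ _ UV x [W [cW WU] Wx]; exists W => //; split => //.
  by move=> z /WU /UV.
- move=> [_ alg]; split => // U cU x /(alg U cU).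
  by apply: closureS; exact: (P1 U cU).1.
- move=> U [[oU cU] uU]; split.
    move=> sU; apply/seteqP; split.
      by move=> x [V [_ VU] Vx]; exact: VU.
    move=> x Ux; exists U; last exact: Ux.
    split; last by []. split; first by split. exact: sU.
  move=> eU; split => // m [Um mmin].
  have := Um; rewrite -eU => -[V [[_ [_ _ minV]] VU] Vm].
  apply: minV; split => // z Vz lzm; apply: mmin => //; exact: VU.
Qed.
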